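(* Let $w\in\{a,\alpha\}^*$ be such that $\varphi_w$ is primitive, let $\mathbf{u}$ be a fixed point of $\varphi_w$, and let $p\neq\varepsilon$ be a prefix of $\mathbf{u}$. Then the derived word $\mathbf{d}_{\mathbf{u}}(p)$ is fixed by a substitution from $C(F(w))\cup C(H(w))$, where $C(x) = \{\varphi_v : v=\mathrm{cyc}^k(x),\ k\in\mathbb{N}\}$.
   Context: Morphisms on $\{0,1\}^*$: $\varphi_a: 0\mapsto 0, 1 \mapsto 10$; $\varphi_b: 0 \mapsto 0, 1\mapsto 01$; $\varphi_\alpha: 0\mapsto 01, 1\mapsto 1$; $\varphi_\beta: 0\mapsto 10, 1 \mapsto 1$; for $w=w_0\cdots w_{m-1}$, $\varphi_w = \varphi_{w_0}\circ\cdots\circ\varphi_{w_{m-1}}$. $\mathrm{cyc}(u_0u_1\cdots u_{n-1}) = u_1\cdots u_{n-1}u_0$. $H, F$ are monoid morphisms on $\{a,b,\alpha,\beta\}^*$: $H(a)=H(b)=b$, $H(\alpha)=\alpha$, $H(\beta)=\beta$; $F(a)=a$, $F(b)=b$, $F(\alpha)=F(\beta)=\beta$. A morphism is primitive if some power maps every letter to a word containing every letter. Derived word: for a uniformly recurrent word $\mathbf{u}$ and factor $v$, a return word of $v$ is a factor $r$ such that $rv$ is a factor in which $v$ occurs exactly twice (as prefix and suffix); with $r_0,\dots,r_k$ all return words and $\mathbf{u}=p'\,r_{s_0}r_{s_1}\cdots$, $|p'|$ the first occurrence of $v$, $\mathbf{d}_{\mathbf{u}}(v)=s_0s_1\cdots$,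 up to permutation of letters. *)

(* Defs.v *)
From mathcomp Require Import all_boot.
Set Implicit Arguments. Unset Strict Implicit. Unset Printing Implicit Defensive.

(* Binary letters: false = 0, true = 1.  Finite words: seq bool.
   Infinite words: nat -> bool. *)

Inductive lett := La | Lb | Lalpha | Lbeta.

Definition phi_letter (l : lett) (x : bool) : seq bool :=
  match l, x with
  | La, false => [:: false]          | La, true => [:: true; false]
  | Lb, false => [:: false]          | Lb, true => [:: false; true]
  | Lalpha, false => [:: false; true] | Lalpha, true => [:: true]
  | Lbeta, false => [:: true; false]  | Lbeta, true => [:: true]
  end.

Definition morph (f : bool -> seq bool) (x : seq bool) : seq bool :=
  flatten (map f x).

Definition phiw (w : seq lett) (x : seq bool) : seq bool :=
  foldr (fun l y => morph (phi_letter l) y) x w.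

Definition primitive_w (w : seq lett) : Prop :=
  exists k, 0 < k /\ forall a b : bool, b \in iter k (phiw w) [:: a].

Definition H_letter (l : lett) : lett :=
  match l with La | Lb => Lb | Lalpha => Lalpha | Lbeta => Lbeta end.
Definition F_letter (l : lett) : lett :=
  match l with La => La | Lb => Lb | Lalpha | Lbeta => Lbeta end.
Definition Hw (w : seq lett) : seq lett := map H_letter w.
Definition Fw (w : seq lett) : seq lett := map F_letter w.

Definition cyc (T : Type) (s : seq T) : seq T :=
  match s with [::] => [::] | x :: s' => rcons s' x end.

Definition in_C (x : seq lett) (f : seq bool -> seq bool) : Prop :=
  exists k, f = phiw (iter k (@cyc lett) x).

Definition in_a_alpha (l : lett) : bool :=
  match l with La | Lalpha => true | _ => false end.

Definition pref (u : nat -> bool) (n : nat) : seq bool := mkseq u n.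

Definition prefix_of (x : seq bool) (u : nat -> bool) : Prop :=
  forall i, i < size x -> nth false x i = u i.

(* u is a fixed point of the (non-erasing) morphism f, i.e. f(u) = u:
   the image of every prefix of u is a prefix of u. *)
Definition is_fixed_point (f : seq bool -> seq bool) (u : nat -> bool) : Prop :=
  forall n, prefix_of (f (pref u n)) u.

Definition occurs_at (u : nat -> bool) (v : seq bool) (i : nat) : Prop :=
  forall j, j < size v -> nth false v j = u (i + j).

Definition factor (u : nat -> bool) (v : seq bool) : Prop :=
  exists i, occurs_at u v i.

Definition occurs_fin (x v : seq bool) (i : nat) : Prop :=
  i + size v <= size x /\ forall j, j < size v -> nth false v j = nth false x (i + j).

Definition return_word (u : nat -> bool) (v r : seq bool) : Prop :=
  factor u (r ++ v) /\ 0 < size r /\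
  forall i, occurs_fin (r ++ v) v i <-> (i = 0 \/ i = size r).

Definition first_occ (u : nat -> bool) (v : seq bool) (i0 : nat) : Prop :=
  occurs_at u v i0 /\ forall j, j < i0 -> ~ occurs_at u v j.

(* d is (a representative, up to permutation of letters, of) the derived
   word d_u(v): r_0, ..., r_k is an enumeration without repetition of all
   return words of v in u, and u = p' r_{d 0} r_{d 1} ... where |p'| is the
   first occurrence of v in u.  Any enumeration is allowed, which is
   exactly the "up to permutation of letters" clause. *)
Definition is_derived_word (u : nat -> bool) (v : seq bool) (d : nat -> nat) : Prop :=
  exists (k : nat) (r : nat -> seq bool),
    (forall i j, i <= k -> j <= k -> r i = r j -> i = j) /\
    (forall x, return_word u v x <-> exists2 i, i <= k & r i = x) /\
    (forall n, d n <= k) /\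
    exists i0, first_occ u v i0 /\
      forall n, prefix_of (pref u i0 ++ flatten [seq r (d j) | j <- iota 0 n]) u.

(* Main.v *)
Require Import Defs.
From mathcomp Require Import all_boot.
From mathcomp Require Import zify.

Set Implicit Arguments. Unset Strict Implicit. Unset Printing Implicit Defensive.

Definition blk (e b : bool) : seq bool := if b == e then [:: b] else [:: b; e].
Definition phe (e : bool) (x : seq bool) : seq bool := flatten (map (blk e) x).

Lemma phe_cat e x y : phe e (x ++ y) = phe e x ++ phe e y.
Proof. by rewrite /phe map_cat flatten_cat. Qed.

Lemma phe_cons e b x : phe e (b :: x) = blk e b ++ phe e x.
Proof. by []. Qed.

Lemma phe_rcons e x b : phe e (rcons x b) = phe e x ++ blk e b.
Proof. by rewrite -cats1 phe_cat /phe /= cats0. Qed.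

Lemma size_blk e b : 0 < size (blk e b) <= 2.
Proof. by rewrite /blk; case: (b == e). Qed.

Lemma blk_head e b : nth false (blk e b) 0 = b.
Proof. by rewrite /blk; case: (b == e). Qed.

Lemma size_phe e x : size x <= size (phe e x).
Proof.
elim: x => [|b x IH] //=; rewrite phe_cons size_cat.
have := size_blk e b; lia.
Qed.

Lemma last_phe e x : last e (phe e x) = e.
Proof.
elim: x => [|b x IH] //=; rewrite phe_cons last_cat.
have -> : last e (blk e b) = e by rewrite /blk; case: eqP => //= ->.
exact: IH.
Qed.

Fixpoint dec (e : bool) (q : seq bool) : seq bool :=
  match q with
  | [::] => [::]
  | b :: r => if b == e then b :: dec e r else
      match r with [::] => [:: b] | _ :: r' => b :: dec e r' end
  end.

Fixpoint wf (e : bool) (q : seq bool) : bool :=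
  match q with
  | [::] => true
  | b :: r => if b == e then wf e r else
      match r with [::] => true | b' :: r' => (b' == e) && wf e r' end
  end.






Lemma size_dec e q : size (dec e q) <= size q.
Proof.
have H : forall n q, size q <= n -> size (dec e q) <= size q.
  elim=> [|n IH] [|b r] //= Hs.
  case: (b == e) => /=.
    have H1 : size r <= n by lia.
    have := IH r H1; lia.
  case: r Hs => [|b' r'] //= Hs.
  have H1 : size r' <= n by lia.
  have := IH r' H1; lia.
exact: H (leqnn _).
Qed.

Lemma size_dec_lt e b r : b != e -> r != [::] -> size (dec e (b :: r)) < size (b :: r).
Proof.
move=> /negbTE Hb; rewrite /= Hb; case: r => [|b' r'] //= _.
have := size_dec e r'; lia.
Qed.

Definition shiftw (v : nat -> bool) : nat -> bool := fun n => v n.+1.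

Lemma occurs_cons v b r i :
  occurs_at v (b :: r) i <-> v i = b /\ occurs_at v r i.+1.
Proof.
split.
- move=> H; split; first by rewrite -[i]addn0; symmetry; exact: (H 0).
  by move=> j Hj; rewrite addSnnS; exact: (H j.+1).
- move=> [H1 H2] [|j] /= Hj; first by rewrite addn0.
  by rewrite H2 // addSnnS.
Qed.

Lemma occurs_nil v i : occurs_at v [::] i.
Proof. by []. Qed.

Lemma occurs_cat v x y i :
  occurs_at v (x ++ y) i <-> occurs_at v x i /\ occurs_at v y (i + size x).
Proof.
elim: x i => [|b x IH] i /=.
- by rewrite addn0; split => // -[].
- rewrite !occurs_cons IH addSnnS; tauto.
Qed.

Lemma prefix_occurs x v : prefix_of x v <-> occurs_at v x 0.
Proof. by []. Qed.

Lemma pref_occurs v n : occurs_at v (pref v n) 0.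
Proof. by move=> j; rewrite size_mkseq => Hj; rewrite nth_mkseq. Qed.

Lemma occurs_same v x y i : occurs_at v x i -> occurs_at v y i -> size x = size y -> x = y.
Proof.
move=> Hx Hy Hs; apply: (@eq_from_nth _ false) => // j Hj.
by rewrite Hx // Hy // -Hs.
Qed.

Lemma occurs_ext v v' x i : (forall n, v n = v' n) -> occurs_at v x i -> occurs_at v' x i.
Proof. by move=> H Hx j Hj; rewrite -H Hx. Qed.

Lemma dec_phe e x : dec e (phe e x) = x.
Proof.
elim: x => [|b x IH] //=; rewrite phe_cons /blk.
case: eqP => [->|ne] /=; first by rewrite eqxx IH.
by have /eqP/negbTE -> := ne; rewrite IH.
Qed.

Lemma phe_inj e : injective (phe e).
Proof. by move=> x y H; rewrite -(dec_phe e x) H dec_phe. Qed.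

Unset Implicit Arguments.


Definition Img e (x v : nat -> bool) := forall m, prefix_of (phe e (pref x m)) v.
Definition pos e (x : nat -> bool) m := size (phe e (pref x m)).

Section ImgSec.
Variables (e : bool) (x v : nat -> bool).
Hypothesis HI : Img e x v.

Lemma pos0 : pos e x 0 = 0.
Proof. by []. Qed.

Lemma posS m : pos e x m.+1 = pos e x m + size (blk e (x m)).
Proof. by rewrite /pos /pref mkseqS phe_rcons size_cat. Qed.

Lemma occ_blk m : occurs_at v (blk e (x m)) (pos e x m).
Proof.
have := HI m.+1; rewrite prefix_occurs /pref mkseqS phe_rcons occurs_cat.
by case.
Qed.

Lemma v_pos m : v (pos e x m) = x m.
Proof.
have := occ_blk m 0; rewrite addn0 blk_head => <- //.
by case/andP: (size_blk e (x m)).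
Qed.

Lemma pos_lt m m' : m < m' -> pos e x m < pos e x m'.
Proof.
elim: m' => [|m' IH] //; rewrite ltnS leq_eqVlt => /orP [/eqP <-|H].
  by rewrite posS; case/andP: (size_blk e (x m)) => H _; lia.
by have := IH H; rewrite (posS m'); lia.
Qed.

Lemma pos_le m m' : m <= m' -> pos e x m <= pos e x m'.
Proof. by rewrite leq_eqVlt => /orP [/eqP ->//|/pos_lt /ltnW]. Qed.

Lemma pos_inj m m' : pos e x m = pos e x m' -> m = m'.
Proof.
move=> H; case: (ltngtP m m') => // Hm.
- have := pos_lt _ _ Hm; lia.
- have := pos_lt _ _ Hm; lia.
Qed.

Lemma pos_ltE m m' : (pos e x m < pos e x m') = (m < m').
Proof.
apply/idP/idP; last exact: pos_lt.
move=> H; case: (ltngtP m m') => // Hm.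
- have := pos_lt _ _ Hm; lia.
- rewrite Hm in H; lia.
Qed.

Lemma cover i : exists m k, k < size (blk e (x m)) /\ i = pos e x m + k.
Proof.
elim: i => [|i [m [k [Hk ->]]]]; first by exists 0, 0; split; [case/andP: (size_blk e (x 0)) | rewrite pos0].
case: (ltnP k.+1 (size (blk e (x m)))) => H.
  by exists m, k.+1; rewrite addnS.
exists m.+1, 0; rewrite posS; case/andP: (size_blk e (x m)) => H1 H2; split.
  by case/andP: (size_blk e (x m.+1)).
lia.
Qed.

Lemma pos_occ X m : occurs_at x X m ->
  pos e x (m + size X) = pos e x m + size (phe e X) /\ occurs_at v (phe e X) (pos e x m).
Proof.
elim: X m => [|b X IH] m; first by rewrite addn0 addn0.
rewrite occurs_cons => -[Hb HX]; have [H1 H2] := IH _ HX.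
rewrite phe_cons size_cat occurs_cat /= -addSnnS H1 posS Hb addnA; split => //.
split; first by have := occ_blk m; rewrite Hb.
by rewrite -Hb -posS.
Qed.

Lemma blk_cases b : blk e b = if b == e then [:: b] else [:: b; e].
Proof. by []. Qed.

Lemma cut_iff i : 0 < i -> (exists m, pos e x m = i) <-> v i.-1 = e.
Proof.
move=> Hi; split.
- move=> [[|m] Hm]; first by rewrite pos0 in Hm; lia.
  have := occ_blk m (size (blk e (x m))).-1.
  rewrite (_ : pos e x m + _ = i.-1); last by rewrite -Hm posS; case/andP: (size_blk e (x m)); lia.
  move=> <-; last by case/andP: (size_blk e (x m)); lia.
  by rewrite /blk; case: eqP => //= ->.
- have [m [k [Hk Hik]]] := cover i.-1.
  have := occ_blk m k Hk; rewrite -Hik => <-.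
  move: Hk; rewrite /blk; case: eqP => /= Hme Hk.
  + move=> _; exists m.+1; rewrite posS /blk; case: eqP => //= _; lia.
  + case: k Hk Hik => [|[|k]] Hk Hik /=.
    * by move=> /Hme.
    * move=> _; exists m.+1; rewrite posS /blk; case: eqP => //= _; lia.
    * by [].
Qed.

Lemma notE_next i : v i != e -> v i.+1 = e.
Proof.
have [m [k [Hk ->]]] := cover i.
rewrite -(occ_blk m k Hk).
move: Hk; rewrite /blk; case: eqP => /= Hme Hk.
- case: k Hk => [|k] Hk; last by exfalso; lia.
  by rewrite /= Hme eqxx.
- case: k Hk => [|[|k]] Hk.
  + move=> _; have := occ_blk m 1; rewrite /blk; case: eqP => [/Hme|_] //= H.
    by rewrite addn0 -addn1 -H.
  + by rewrite /= eqxx.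
  + exfalso; lia.
Qed.

Lemma wf_occ : forall q m, occurs_at v q (pos e x m) -> wf e q.
Proof.
have H : forall n q m, size q <= n -> occurs_at v q (pos e x m) -> wf e q.
  elim=> [|n IH] [|b r] m //= Hs; rewrite occurs_cons v_pos => -[Hb Hr].
  case: eqP => Hbe.
    apply: (IH r m.+1); first lia.
    by rewrite posS Hb Hbe /blk eqxx addn1.
  case: r Hs Hr => [|b' r'] //= Hs; rewrite occurs_cons => -[Hb' Hr'].
  have := occ_blk m 1; rewrite Hb /blk; case: eqP => //= _ Hv.
  rewrite addn1 in Hv; rewrite -Hb' -Hv // eqxx /=.
  apply: (IH r' m.+1); first lia.
  by rewrite posS Hb /blk; case: eqP => //= _; rewrite addn2.
by move=> q m Hq; apply: (H _ q m (leqnn _)).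
Qed.

Lemma dec_occ : forall q m, wf e q ->
  occurs_at v q (pos e x m) <-> occurs_at x (dec e q) m.
Proof.
have H : forall n q m, size q <= n -> wf e q ->
    occurs_at v q (pos e x m) <-> occurs_at x (dec e q) m.
  elim=> [|n IH] [|b r] m //= Hs.
  rewrite occurs_cons v_pos; case: eqP => Hbe.
    move=> Hw; rewrite occurs_cons.
    have Hs' : size r <= n by simpl in Hs; lia.
    split => -[Hb Hr]; split => //.
      have Hp : pos e x m.+1 = (pos e x m).+1 by rewrite posS Hb Hbe /blk eqxx addn1.
      by apply/(IH r m.+1 Hs' Hw); rewrite Hp.
    have Hp : pos e x m.+1 = (pos e x m).+1 by rewrite posS Hb Hbe /blk eqxx addn1.
    by rewrite -Hp; apply/(IH r m.+1 Hs' Hw).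
  case: r Hs => [|b' r'] Hs; first by rewrite occurs_cons; split => -[]; split.
  move=> /andP [/eqP Hb' Hw]; rewrite occurs_cons occurs_cons.
  split.
    move=> [Hb [_ Hr]]; split => //; apply/(IH r' m.+1) => //; first by simpl in Hs; lia.
    by rewrite posS Hb /blk; case: eqP => [/Hbe|_] //=; rewrite addn2.
  move=> [Hb Hr]; split => //; split.
    have := occ_blk m 1; rewrite Hb /blk; case: eqP => [/Hbe|_] //= Hv.
    by rewrite addn1 in Hv; rewrite Hb' -Hv.
  have -> : (pos e x m).+1.+1 = pos e x m.+1 by rewrite posS Hb /blk; case: eqP => [/Hbe|_] //=; rewrite addn2.
  by apply/(IH r' m.+1) => //; simpl in Hs; lia.
by move=> q m Hw; apply: H (leqnn _) Hw.
Qed.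

End ImgSec.
Arguments posS {e x}.
Arguments pos_lt {e x}.
Arguments pos_le {e x}.
Arguments pos_inj {e x}.
Arguments pos_ltE {e x}.
Arguments cover {e x}.
Arguments occ_blk {e x v}.
Arguments v_pos {e x v}.
Arguments pos_occ {e x v}.
Arguments cut_iff {e x v}.
Arguments notE_next {e x v}.
Arguments wf_occ {e x v}.
Arguments dec_occ {e x v}.


Definition mR (R0 R1 : seq bool) (x : seq bool) : seq bool :=
  flatten (map (fun b : bool => if b then R1 else R0) x).

Lemma mR_cat R0 R1 x y : mR R0 R1 (x ++ y) = mR R0 R1 x ++ mR R0 R1 y.
Proof. by rewrite /mR map_cat flatten_cat. Qed.

Lemma mR_id x : mR [:: false] [:: true] x = x.
Proof. by elim: x => [|[] x IH] //=; rewrite /mR /= -/(mR _ _ x) IH. Qed.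

Lemma mR_phe e R0 R1 x : mR (phe e R0) (phe e R1) x = phe e (mR R0 R1 x).
Proof.
elim: x => [|b x IH] //=.
by rewrite /mR /= -!/(mR _ _ x) IH phe_cat; case: b.
Qed.

Lemma conj_flat e (F : bool -> seq bool) X : (forall b, last e (F b) = e) ->
  flatten (map (fun b => belast e (F b)) X) ++ [:: e] = e :: flatten (map F X).
Proof.
move=> HF; elim: X => [|b X IH] //=.
rewrite -catA IH -cat_rcons.
by rewrite -{2}(HF b) -lastI.
Qed.

Lemma size_pref (v : nat -> bool) n : size (pref v n) = n.
Proof. exact: size_mkseq. Qed.

Section Main.
Variables (V : nat -> nat -> bool) (E : nat -> bool) (c : bool).
Hypothesis HI : forall j, Img (E j) (V j.+1) (V j).
Hypothesis H0 : forall j, V j 0 = c.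
Hypothesis H1 : forall j, V j 1 = ~~ c.
Hypothesis HE : forall j b, exists k, E (j + k) = b.

Definition Main j s q := exists j' R0 R1, R0 != R1 /\ 0 < size R0 /\ 0 < size R1 /\
  (forall n, occurs_at (V j) (mR R0 R1 (pref (shiftw (V j')) n)) s) /\
  (forall i, s <= i -> (occurs_at (V j) q i <->
      exists n, i = s + size (mR R0 R1 (pref (shiftw (V j')) n)))).

Definition valid j s q := s <= 1 /\ occurs_at (V j) q s /\ (q = [::] -> s = 1).

Lemma base j : Main j 1 [::].
Proof.
exists j, [:: false], [:: true]; do 3! split => //; split.
- move=> n; rewrite mR_id => k; rewrite size_pref => Hk.
  by rewrite nth_mkseq.
- move=> i Hi; split => // _; exists i.-1; rewrite mR_id size_pref; lia.
Qed.

Lemma step_al j s b r : valid j s (b :: r) -> b != E j ->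
  valid j.+1 s (dec (E j) (b :: r)) /\
  (Main j.+1 s (dec (E j) (b :: r)) -> Main j s (b :: r)).
Proof.
move=> [Hs1 [Hocc _]] Hb.
have HIj := HI j.
move: (E j) HIj Hb => e HIj Hb.
set q := b :: r.
have Hps : pos e (V j.+1) s = s.
  case: s Hs1 Hocc => [|[|s]] // _ Hocc.
  have := Hocc 0 isT; rewrite /= addn0 H1 => Hbc.
  rewrite posS pos0 H0 /blk.
  have -> : c == e by move: Hb; rewrite Hbc; clear; case: c; case: e.
  by [].
have Hwf : wf e q by apply: (wf_occ HIj) (s) _; rewrite Hps.
have Hdec : occurs_at (V j.+1) (dec e q) s.
  by rewrite -(dec_occ HIj) // Hps.
split; first by split => //; split => //; rewrite /q /=; case: (b == e); case: r {q Hwf Hdec Hocc}.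
move=> [j' [R0 [R1 [HR [HR0 [HR1 [HA HB]]]]]]].
exists j', (phe e R0), (phe e R1); split.
  by apply/negP => /eqP /phe_inj /eqP; apply/negP.
split; first exact: leq_trans HR0 (size_phe e R0).
split; first exact: leq_trans HR1 (size_phe e R1).
split.
  move=> n; rewrite mR_phe; have := (pos_occ HIj _ _ (HA n)).2; by rewrite Hps.
move=> i Hi; split.
- move=> Hq.
  have [m Hm] : exists m, pos e (V j.+1) m = i.
    case: i Hi Hq => [|i] Hi Hq; first by exists 0.
    apply/(cut_iff HIj) => //=.
    apply/eqP; apply: contraT => Hne.
    have Hb0 : b = V j i.+1 by rewrite -[i.+1]addn0; exact: (Hq 0 isT).
    by move: Hb; rewrite Hb0 (notE_next HIj _ Hne) eqxx.
  have Hsm : s <= m.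
    case: (leqP s m) => // Hms; have := @pos_lt e (V j.+1) _ _ Hms; lia.
  have Hx : occurs_at (V j.+1) (dec e q) m by rewrite -(dec_occ HIj) // Hm.
  have [n Hn] := (HB m Hsm).1 Hx.
  have [Hp _] := pos_occ HIj _ _ (HA n).
  by exists n; rewrite -Hm Hn mR_phe Hp Hps.
- move=> [n ->].
  have [Hp _] := pos_occ HIj _ _ (HA n).
  rewrite mR_phe.
  have -> : s + size (phe e (mR R0 R1 (pref (shiftw (V j')) n))) =
    pos e (V j.+1) (s + size (mR R0 R1 (pref (shiftw (V j')) n))) by rewrite Hp Hps.
  rewrite (dec_occ HIj) //.
  apply/(HB _ _).2; first lia.
  by exists n.
Qed.


Lemma step_mis j s r : valid j s (E j :: r) ->
  valid j.+1 1 (dec (E j) r) /\ (Main j.+1 1 (dec (E j) r) -> Main j s (E j :: r)).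
Proof.
move=> [Hs1 [Hocc _]].
have HIj := HI j.
move: (E j) HIj Hocc => e HIj Hocc.
move/occurs_cons: Hocc => [Hve Hr].
have Hp1 : pos e (V j.+1) 1 = s.+1.
  rewrite posS pos0 H0 /blk.
  case: s Hs1 Hve Hr => [|[|s]] // _ Hve Hr.
  - by rewrite -(H0 j) Hve eqxx.
  - have -> : (c == e) = false by move: Hve; rewrite H1; clear; case: c; case: e.
    by [].
have Hwf : wf e r by apply: (wf_occ HIj r 1); rewrite Hp1.
have Hdec : occurs_at (V j.+1) (dec e r) 1 by rewrite -(dec_occ HIj) // Hp1.
split; first by [].
move=> [j' [R0 [R1 [HR [HR0 [HR1 [HA HB]]]]]]].
set S0 := belast e (phe e R0). set S1 := belast e (phe e R1).
have Heq : forall X, mR S0 S1 X ++ [:: e] = e :: phe e (mR R0 R1 X).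
  move=> X; rewrite -mR_phe.
  have E1 : mR S0 S1 X = flatten (map (fun b : bool => belast e ((fun b : bool => if b then phe e R1 else phe e R0) b)) X).
    by rewrite /mR; congr flatten; apply: eq_map => -[].
  rewrite E1 conj_flat; last by move=> -[]; rewrite last_phe.
  by rewrite /mR.
have Hsz : forall X, size (mR S0 S1 X) = size (phe e (mR R0 R1 X)).
  move=> X; have := congr1 size (Heq X); rewrite size_cat /= addn1; by case.
have K0 := lastI e (phe e R0); rewrite last_phe -/S0 in K0.
have K1 := lastI e (phe e R1); rewrite last_phe -/S1 in K1.
exists j', S0, S1; split.
  apply/negP => /eqP HS; move/negP: HR; apply; apply/eqP.
  apply: (@phe_inj e).
  have : e :: phe e R0 = e :: phe e R1 by rewrite K0 K1 HS.
  by case.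
split; first by rewrite size_belast; exact: leq_trans HR0 (size_phe e R0).
split; first by rewrite size_belast; exact: leq_trans HR1 (size_phe e R1).
split.
  move=> n; have := (pos_occ HIj _ _ (HA n)).2; rewrite Hp1 => H.
  have : occurs_at (V j) (e :: phe e (mR R0 R1 (pref (shiftw (V j')) n))) s.
    by apply/occurs_cons.
  by rewrite -Heq => /occurs_cat [].
move=> i Hi; split.
- move=> /occurs_cons [Hvi Hri].
  have [m Hm] : exists m, pos e (V j.+1) m = i.+1 by apply/(cut_iff HIj).
  have Hm1 : 1 <= m by case: m Hm => [|m] //; rewrite pos0.
  have Hx : occurs_at (V j.+1) (dec e r) m by rewrite -(dec_occ HIj) // Hm.
  have [n Hn] := (HB m Hm1).1 Hx.
  have [Hp _] := pos_occ HIj _ _ (HA n).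
  exists n; move: Hm; rewrite Hn Hp Hp1 Hsz; lia.
- move=> [n Hn].
  have [Hp _] := pos_occ HIj _ _ (HA n).
  have Hm : pos e (V j.+1) (1 + size (mR R0 R1 (pref (shiftw (V j')) n))) = i.+1.
    by rewrite Hp Hp1 -Hsz Hn.
  apply/occurs_cons; split.
    by have := (cut_iff HIj i.+1 isT).1 (ex_intro _ _ Hm).
  rewrite -Hm (dec_occ HIj) //; apply/(HB _ _).2; first lia.
  by exists n.
Qed.

Lemma single (k : nat) : forall j s b, E (j + k) = b -> valid j s [:: b] -> Main j s [:: b].
Proof.
elim: k => [|k IH] j s b Hk Hv.
- rewrite addn0 in Hk; rewrite -Hk in Hv *.
  have [_ H] := step_mis _ _ _ Hv; apply: H; exact: base.
- case: (eqVneq b (E j)) => [Hb|Hb].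
    rewrite Hb in Hv *; have [_ H] := step_mis _ _ _ Hv; apply: H; exact: base.
  have [Hv' H] := step_al _ _ _ _ Hv Hb; apply: H.
  have -> : dec (E j) [:: b] = [:: b] by rewrite /= (negbTE Hb).
  apply: (IH j.+1) => //; first by rewrite addSnnS.
  by move: Hv'; rewrite /= (negbTE Hb).
Qed.

Lemma Main_all : forall j s q, valid j s q -> Main j s q.
Proof.
have H : forall N j s q, size q <= N -> valid j s q -> Main j s q.
  elim=> [|N IH] j s [|b r] Hs Hv //.
  - by have [_ [_ ->]] := Hv; [exact: base|].
  - by have [_ [_ ->]] := Hv; [exact: base|].
  - case: (eqVneq b (E j)) => [Hb|Hb].
      rewrite Hb in Hv *; have [Hv' H] := step_mis _ _ _ Hv; apply: H.
      apply: IH Hv'; have := size_dec (E j) r; simpl in Hs; lia.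
    case: r Hs Hv => [|b' r'] Hs Hv.
      have [k Hk] := HE j b; exact: (single _ _ _ _ Hk Hv).
    have [Hv' H] := step_al _ _ _ _ Hv Hb; apply: H.
    apply: IH Hv'; have := size_dec_lt Hb (isT : b' :: r' != [::]); simpl in Hs |- *; lia.
by move=> j s q; apply: H (leqnn _).
Qed.

End Main.


Section Derived.
Variables (u : nat -> bool) (p : seq bool) (R0 R1 : seq bool) (d : nat -> bool).
Hypothesis HR : R0 != R1.
Hypothesis HR0 : 0 < size R0.
Hypothesis HR1 : 0 < size R1.
Hypothesis HA : forall n, occurs_at u (mR R0 R1 (pref d n)) 0.
Hypothesis HB : forall i, occurs_at u p i <-> exists n, i = size (mR R0 R1 (pref d n)).
Hypothesis Hboth : forall b, exists n, d n = b.

Let Rb (b : bool) := if b then R1 else R0.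
Let o n := size (mR R0 R1 (pref d n)).

Lemma oS n : o n.+1 = o n + size (Rb (d n)).
Proof. by rewrite /o /pref mkseqS -cats1 mR_cat size_cat /mR /= cats0. Qed.

Lemma Rb_pos b : 0 < size (Rb b).
Proof. by case: b. Qed.

Lemma o_lt m n : m < n -> o m < o n.
Proof.
elim: n => [|n IH] //; rewrite ltnS leq_eqVlt => /orP [/eqP <-|H].
  by rewrite oS; have := Rb_pos (d m); lia.
by have := IH H; rewrite oS; lia.
Qed.

Lemma o_ltE m n : (o m < o n) = (m < n).
Proof.
apply/idP/idP; last exact: o_lt.
move=> H; case: (ltngtP m n) => // Hm.
- have := o_lt _ _ Hm; lia.
- rewrite Hm in H; lia.
Qed.

Lemma occ_Rb n : occurs_at u (Rb (d n)) (o n).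
Proof.
have := HA n.+1; rewrite /pref mkseqS -cats1 mR_cat occurs_cat => -[_].
by rewrite /mR /= cats0.
Qed.

Lemma occ_o n : occurs_at u p (o n).
Proof. by apply/HB; exists n. Qed.

Lemma fin_occ x k i : occurs_fin (x ++ p) p k -> occurs_at u (x ++ p) i ->
  occurs_at u p (i + k).
Proof.
move=> [Hk Hj] Hi j Hjp.
rewrite Hj // Hi; first by rewrite addnA.
rewrite size_cat; rewrite size_cat in Hk; lia.
Qed.

Lemma ret_Rb b : return_word u p (Rb b).
Proof.
have [n Hn] := Hboth b; rewrite -Hn.
have Hocc : occurs_at u (Rb (d n) ++ p) (o n).
  apply/occurs_cat; split; first exact: occ_Rb.
  rewrite -oS; exact: occ_o.
split; first by exists (o n).
split; first exact: Rb_pos.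
move=> k; split.
- move=> Hf; have Hk := Hf.1; rewrite size_cat in Hk.
  have [m Hm] := (HB _).1 (fin_occ _ _ _ Hf Hocc).
  have Hmn : n <= m.
    case: (leqP n m) => // Hmn; have := o_lt _ _ Hmn; rewrite -/(o m) in Hm; lia.
  have Hmn1 : m <= n.+1.
    case: (leqP m n.+1) => // Hmn1; have := o_lt _ _ Hmn1; rewrite -/(o m) in Hm.
    rewrite oS; lia.
  have : m = n \/ m = n.+1 by lia.
  rewrite -/(o m) in Hm.
  by case=> Hc; [left | right]; move: Hm; rewrite Hc ?oS; lia.
- move=> [->|->].
  + split; first by rewrite size_cat; lia.
    move=> j Hj; rewrite add0n.
    have := occ_o n j Hj; have := Hocc j; rewrite size_cat => H1 H2.
    rewrite H2 H1 //; lia.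
  + split; first by rewrite size_cat addnC.
    move=> j Hj; rewrite nth_cat ltnNge leq_addr /= addKn //.
Qed.

Lemma ret_iff x : return_word u p x <-> exists2 i, i <= 1 & (if i == 0 then R0 else R1) = x.
Proof.
split.
- move=> [[i Hi] [Hx Hf]].
  have /occurs_cat [Hxi Hpi] := Hi.
  have Hp0 : occurs_at u p i.
    by have := fin_occ _ _ _ ((Hf 0).2 (or_introl erefl)) Hi; rewrite addn0.
  have [n Hn] := (HB i).1 Hp0.
  have [n' Hn'] := (HB _).1 Hpi.
  rewrite -/(o n) in Hn; rewrite -/(o n') in Hn'.
  have Hlt : n < n' by rewrite -o_ltE; lia.
  have Hn1 : n' = n.+1.
    apply/eqP; apply: contraT => Hne.
    have Hlt2 : n.+1 < n' by lia.
    have H1 := o_lt _ _ (ltnSn n); have H2 := o_lt _ _ Hlt2.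
    have Hfin : occurs_fin (x ++ p) p (o n.+1 - o n).
      split; first by rewrite size_cat; lia.
      move=> j Hj; rewrite (occ_o n.+1 j Hj) Hi; last by rewrite size_cat; lia.
      congr u; lia.
    have := (Hf _).1 Hfin; lia.
  have Hsz : size x = size (Rb (d n)) by move: Hn'; rewrite Hn1 oS; lia.
  exists (nat_of_bool (d n)); first by case: (d n).
  have Hr := occ_Rb n; rewrite -Hn in Hr.
  rewrite (occurs_same Hxi Hr Hsz).
  by rewrite /Rb; case: (d n).
- move=> [i Hi <-].
  case: i Hi => [|[|i]] // _.
  + exact: (ret_Rb false).
  + exact: (ret_Rb true).
Qed.

Lemma derived_ok : is_derived_word u p (fun n => nat_of_bool (d n)).
Proof.
exists 1, (fun i => if i == 0 then R0 else R1); split.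
  move=> [|[|i]] [|[|j]] //= _ _ H; by [move/eqP: HR; rewrite H | move/eqP: HR; rewrite H].
split; first exact: ret_iff.
split; first by move=> n; case: (d n).
exists 0; split.
  split; last by [].
  by apply/HB; exists 0.
move=> n; rewrite /= prefix_occurs.
have -> : flatten [seq (if nat_of_bool (d j) == 0 then R0 else R1) | j <- iota 0 n] = mR R0 R1 (pref d n).
  rewrite /mR /pref /mkseq -map_comp; congr flatten; apply: eq_map => j /=.
  by case: (d j).
exact: HA.
Qed.

End Derived.


Definition eletter (l : lett) : bool := match l with Lalpha | Lbeta => true | _ => false end.
Definition Gl (c e : bool) : lett :=
  match c, e with false, false => La | false, true => Lbeta | true, false => Lb | true, true => Lalpha end.
Definition ImgW (ws : seq lett) (x v : nat -> bool) := forall m, prefix_of (phiw ws (pref x m)) v.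
Definition ImgL (l : lett) (x v : nat -> bool) := forall m, prefix_of (morph (phi_letter l) (pref x m)) v.

Lemma morph_cat f x y : morph f (x ++ y) = morph f x ++ morph f y.
Proof. by rewrite /morph map_cat flatten_cat. Qed.

Lemma phiw_cat ws x y : phiw ws (x ++ y) = phiw ws x ++ phiw ws y.
Proof. by elim: ws => [|l ws IH] //=; rewrite IH morph_cat. Qed.

Lemma phiw_cons l ws x : phiw (l :: ws) x = morph (phi_letter l) (phiw ws x).
Proof. by []. Qed.

Lemma size_morph l x : size x <= size (morph (phi_letter l) x).
Proof.
elim: x => [|b x IH] //=; rewrite /morph /= size_cat -/(morph _ x).
have : 0 < size (phi_letter l b) by clear; case: l; case: b.
lia.
Qed.

Lemma size_phiw ws x : size x <= size (phiw ws x).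
Proof. elim: ws => [|l ws IH] //=; exact: leq_trans IH (size_morph _ _). Qed.

Lemma phi_blk l b : in_a_alpha l -> phi_letter l b = blk (eletter l) b.
Proof. by case: l => //= _; case: b. Qed.

Lemma morph_phe l x : in_a_alpha l -> morph (phi_letter l) x = phe (eletter l) x.
Proof.
move=> Hl; rewrite /morph /phe; congr flatten; apply: eq_map => b.
exact: phi_blk.
Qed.

Lemma prefix_pref Z v : prefix_of Z v -> Z = pref v (size Z).
Proof.
move=> H; apply: (@eq_from_nth _ false); first by rewrite size_pref.
by move=> i Hi; rewrite nth_mkseq // H.
Qed.

Lemma pref_S (x : nat -> bool) m : pref x m.+1 = x 0 :: pref (shiftw x) m.
Proof.
rewrite /pref /mkseq /= -[1]addn0 iotaDl -map_comp; congr (_ :: _).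
Qed.

Lemma pref_ext (x y : nat -> bool) m : (forall i, x i = y i) -> pref x m = pref y m.
Proof. by move=> H; apply: eq_mkseq. Qed.

Lemma occ1_shift v Z : occurs_at v Z 1 <-> prefix_of Z (shiftw v).
Proof. by split => H j Hj; rewrite H // /shiftw add1n. Qed.

Lemma shift_img e c x v : Img e x v -> x 0 = c -> ImgL (Gl c e) (shiftw x) (shiftw v).
Proof.
move=> HI Hc m; have := HI m.+1; rewrite pref_S Hc phe_cons prefix_occurs occurs_cat.
move=> [Hb Hr]; apply/occ1_shift.
case: (eqVneq c e) => [Hce|Hce].
- move: Hr; rewrite Hce /blk eqxx /= => Hr.
  have -> : morph (phi_letter (Gl e e)) (pref (shiftw x) m) = phe e (pref (shiftw x) m).
    have [He1 He2] : eletter (Gl e e) = e /\ in_a_alpha (Gl e e) by clear; case: e.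
    by rewrite morph_phe // He1.
  exact: Hr.
- move: Hb Hr; rewrite /blk (negbTE Hce) /= => Hb Hr.
  have Hv1 : v 1 = e by have := Hb 1 isT.
  have H : morph (phi_letter (Gl c e)) (pref (shiftw x) m) ++ [:: e] = e :: phe e (pref (shiftw x) m).
    rewrite -conj_flat; last by move=> b; rewrite /blk; case: eqP.
    rewrite /morph; congr (_ ++ _); congr flatten; apply: eq_map => b.
    by move: Hce; clear; case: c; case: e; case: b.
  have : occurs_at v (e :: phe e (pref (shiftw x) m)) 1 by apply/occurs_cons.
  by rewrite -H => /occurs_cat [].
Qed.

Lemma ImgW_cons l ws x x1 v : ImgL l x1 v -> ImgW ws x x1 -> ImgW (l :: ws) x v.
Proof.
move=> HL HW m; rewrite phiw_cons (prefix_pref _ _ (HW m)); exact: HL.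
Qed.

Lemma ImgW_nil x v : (forall i, x i = v i) -> ImgW [::] x v.
Proof. by move=> H m j; rewrite size_pref => Hj; rewrite /= nth_mkseq. Qed.

Lemma ImgW_ext ws x x' v : (forall i, x i = x' i) -> ImgW ws x v -> ImgW ws x' v.
Proof. by move=> H HW m; rewrite -(pref_ext _ _ m H). Qed.

Lemma mkseq_S0 (T : Type) (f : nat -> T) n : mkseq f n.+1 = f 0 :: mkseq (fun i => f i.+1) n.
Proof. by rewrite /mkseq /= -[1]addn0 iotaDl -map_comp. Qed.

Lemma iter_cyc (T : Type) (x0 : T) (s : seq T) k : 0 < size s ->
  iter k (@cyc T) s = mkseq (fun i => nth x0 s ((k + i) %% size s)) (size s).
Proof.
move=> Hn; elim: k => [|k IH] /=.
- apply: (@eq_from_nth _ x0); first by rewrite size_mkseq.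
  by move=> i Hi; rewrite nth_mkseq // add0n modn_small.
- rewrite IH; move: Hn; set n := size s => Hn.
  case: n Hn => [|n] // _.
  rewrite mkseq_S0 /= mkseqS; congr rcons.
  + by apply: eq_mkseq => i /=; rewrite addSnnS.
  + by rewrite addn0 addSnnS modnDr.
Qed.


Section Chain.
Variables (V : nat -> nat -> bool) (E : nat -> bool) (c : bool).
Hypothesis HI : forall j, Img (E j) (V j.+1) (V j).

Lemma H0_from j : V j 0 = V 0 0.
Proof.
elim: j => [|j IH] //; rewrite -IH.
by have := v_pos (HI j) 0; rewrite pos0.
Qed.

Hypothesis H0 : forall j, V j 0 = c.

Lemma chain k : forall j,
  ImgW (mkseq (fun i => Gl c (E (j + i))) k) (shiftw (V (j + k))) (shiftw (V j)).
Proof.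
elim: k => [|k IH] j.
- by apply: ImgW_nil => i; rewrite addn0.
- rewrite mkseq_S0 addn0.
  apply: ImgW_cons; first exact: (shift_img _ _ _ _ (HI j) (H0 j.+1)).
  have -> : mkseq (fun i => Gl c (E (j + i.+1))) k = mkseq (fun i => Gl c (E (j.+1 + i))) k.
    by apply: eq_mkseq => i; rewrite addSnnS.
  by rewrite addnS -addSn; exact: IH.
Qed.

Lemma H1_gen k : forall j, E (j + k) = ~~ c -> V j 1 = ~~ c.
Proof.
elim: k => [|k IH] j Hk.
- rewrite addn0 in Hk.
  have := occ_blk (HI j) 0 1; rewrite pos0 H0 /blk Hk.
  by case: c => /= ->.
- case: (eqVneq (E j) c) => Hc.
  + have := v_pos (HI j) 1; rewrite posS pos0 H0 /blk Hc eqxx /= => ->.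
    by apply: IH; rewrite addSnnS.
  + have Hk' : E j = ~~ c by move: Hc; clear; case: (E j); case: c.
    have := occ_blk (HI j) 0 1; rewrite pos0 H0 /blk Hk'.
    by case: c Hk' {Hc} => /= _ ->.
Qed.

Hypothesis H1 : forall j, V j 1 = ~~ c.

Lemma both_gen k : forall j, E (j + k) = c -> exists n, V j n.+1 = c.
Proof.
elim: k => [|k IH] j Hk.
- rewrite addn0 in Hk; exists 1.
  have := occ_blk (HI j) 1 1.
  rewrite posS pos0 H0 H1 /blk Hk eqxx.
  by case: c => /= ->.
- case: (eqVneq (E j) c) => Hc.
  + exists 1.
    have := occ_blk (HI j) 1 1.
    rewrite posS pos0 H0 H1 /blk Hc eqxx.
    by case: c {Hc Hk} => /= ->.
  + have [n Hn] : exists n, V j.+1 n.+1 = c by apply: IH; rewrite addSnnS.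
    have := v_pos (HI j) n.+1; rewrite Hn.
    have := @pos_lt (E j) (V j.+1) 0 n.+1 isT; rewrite pos0.
    case: (pos (E j) (V j.+1) n.+1) => [|m] // _ Hm.
    by exists m.
Qed.

End Chain.


Definition app (ws : seq lett) (u : nat -> bool) : nat -> bool :=
  fun i => nth false (phiw ws (pref u i.+1)) i.

Lemma pref_take (u : nat -> bool) a b : a <= b -> pref u a = take a (pref u b).
Proof.
move=> Hab; apply: (@eq_from_nth _ false).
  by rewrite size_takel ?size_pref.
move=> i; rewrite size_pref => Hi; rewrite nth_take // !nth_mkseq //; lia.
Qed.

Lemma pref_split (u : nat -> bool) a b : a <= b -> pref u b = pref u a ++ drop a (pref u b).
Proof. by move=> Hab; rewrite (pref_take u _ _ Hab) cat_take_drop. Qed.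

Lemma app_img ws u : ImgW ws u (app ws u).
Proof.
move=> m i Hi; rewrite /app.
set M := maxn m i.+1.
have E1 : nth false (phiw ws (pref u M)) i = nth false (phiw ws (pref u m)) i.
  by rewrite (pref_split u _ _ (leq_maxl m i.+1)) phiw_cat nth_cat Hi.
have Hs : i < size (phiw ws (pref u i.+1)).
  by have := size_phiw ws (pref u i.+1); rewrite size_pref.
have E2 : nth false (phiw ws (pref u M)) i = nth false (phiw ws (pref u i.+1)) i.
  by rewrite (pref_split u _ _ (leq_maxr m i.+1)) phiw_cat nth_cat Hs.
by rewrite -E2 E1.
Qed.

Lemma app_fix ws u : is_fixed_point (phiw ws) u -> forall i, app ws u i = u i.
Proof.
move=> Hf i; rewrite /app; apply: Hf.
by have := size_phiw ws (pref u i.+1); rewrite size_pref.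
Qed.

Lemma app_nil u i : app [::] u i = u i.
Proof. by rewrite /app /= nth_mkseq. Qed.

Lemma Img_ext e x x' v v' : (forall i, x i = x' i) -> (forall i, v i = v' i) ->
  Img e x v -> Img e x' v'.
Proof.
move=> Hx Hv HI m j Hj; rewrite -Hv -(pref_ext _ _ m Hx); apply: HI.
by rewrite (pref_ext _ _ m Hx).
Qed.

Lemma app_step l ws u : in_a_alpha l -> Img (eletter l) (app ws u) (app (l :: ws) u).
Proof.
move=> Hl m.
set Z := phiw ws (pref u m).
have HZ := app_img ws u m; rewrite -/Z in HZ.
have Hm : m <= size Z by have := size_phiw ws (pref u m); rewrite size_pref.
have Ep : pref (app ws u) m = take m Z.
  by rewrite {1}(prefix_pref _ _ HZ) -pref_take.
have H2 := app_img (l :: ws) u m.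
rewrite phiw_cons -/Z morph_phe // -(cat_take_drop m Z) phe_cat in H2.
rewrite Ep; move: H2; rewrite !prefix_occurs => /occurs_cat [].
by [].
Qed.

Definition is_a (l : lett) := match l with La => true | _ => false end.
Definition is_al (l : lett) := match l with Lalpha => true | _ => false end.

Lemma no_alpha w : all is_a w -> forall k, iter k (phiw w) [:: false] = [:: false].
Proof.
move=> Hw; elim=> [|k IH] //=; rewrite IH.
elim: w Hw {IH} => [|l w IHw] //= /andP [Hl /IHw ->].
by case: l Hl.
Qed.

Lemma no_a w : all is_al w -> forall k, iter k (phiw w) [:: true] = [:: true].
Proof.
move=> Hw; elim=> [|k IH] //=; rewrite IH.
elim: w Hw {IH} => [|l w IHw] //= /andP [Hl /IHw ->].
by case: l Hl.
Qed.

Lemma letters w : all in_a_alpha w -> primitive_w w -> has is_a w /\ has is_al w.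
Proof.
move=> Ha [k [Hk Hp]]; split.
- apply/negP => Hn.
  have Hw : all is_al w.
    elim: w Ha Hn {Hp} => [|l w IH] // /andP [Hl Ha] Hn.
    move/negP: Hn; rewrite /= negb_or => /andP [Hl' Hn].
    by rewrite /= (IH Ha (elimN idP Hn)) andbT; case: l Hl Hl'.
  by have := Hp true false; rewrite no_a.
- apply/negP => Hn.
  have Hw : all is_a w.
    elim: w Ha Hn {Hp} => [|l w IH] // /andP [Hl Ha] Hn.
    move/negP: Hn; rewrite /= negb_or => /andP [Hl' Hn].
    by rewrite /= (IH Ha (elimN idP Hn)) andbT; case: l Hl Hl'.
  by have := Hp false true; rewrite no_alpha.
Qed.

Lemma modS_cases j n : 0 < n ->
  (j %% n).+1 < n /\ j.+1 %% n = (j %% n).+1 \/ (j %% n).+1 = n /\ j.+1 %% n = 0.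
Proof.
move=> Hn; have Hr := ltn_pmod j Hn.
have Hj := divn_eq j n.
case: (ltnP (j %% n).+1 n) => H.
- left; split => //.
  rewrite {1}Hj -addnS modnMDl modn_small //.
- right; split; first lia.
  have -> : j.+1 = (j %/ n).+1 * n by rewrite mulSn; lia.
  by rewrite modnMl.
Qed.

Lemma mod_hit j n i0 : i0 < n -> (j + (i0 + n - j %% n)) %% n = i0.
Proof.
move=> Hi0; have Hn : 0 < n by lia.
have Hr := ltn_pmod j Hn.
have Hj := divn_eq j n.
have -> : j + (i0 + n - j %% n) = (j %/ n).+1 * n + i0 by rewrite mulSn; lia.
by rewrite modnMDl modn_small.
Qed.


Theorem corollary31 (w : seq lett) (u : nat -> bool) (p : seq bool) :
  all in_a_alpha w ->
  primitive_w w ->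
  is_fixed_point (phiw w) u ->
  p != [::] ->
  prefix_of p u ->
  exists (d : nat -> bool) (sigma : seq bool -> seq bool),
    is_derived_word u p (fun n => nat_of_bool (d n)) /\
    (in_C (Fw w) sigma \/ in_C (Hw w) sigma) /\
    is_fixed_point sigma d.
Proof.
move=> Ha Hprim Hfix Hp Hpu.
have [HasA HasAl] := letters _ Ha Hprim.
have Hn : 0 < size w by move: HasA; clear; case: w.
move: Hn; set n := size w => Hn.
pose V := fun j => app (drop (j %% n) w) u.
pose E := fun j => eletter (nth La w (j %% n)).
have Hall : forall i, i < n -> in_a_alpha (nth La w i).
  by move=> i Hi; exact: (all_nthP La Ha i Hi).
have HV0 : forall i, V 0 i = u i by move=> i; rewrite /V mod0n drop0 app_fix.
have HI : forall j, Img (E j) (V j.+1) (V j).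
  move=> j.
  have Hr := ltn_pmod j Hn.
  have Hd : drop (j %% n) w = nth La w (j %% n) :: drop (j %% n).+1 w by apply: drop_nth.
  have HV : forall i, V j i = app (nth La w (j %% n) :: drop (j %% n).+1 w) u i.
    by move=> i; rewrite /V Hd.
  have HV1 : forall i, V j.+1 i = app (drop (j %% n).+1 w) u i.
    move=> i; rewrite /V; case: (modS_cases j n Hn) => [[_ ->] // | [H1 ->]].
    by rewrite drop0 app_fix // H1 /n drop_size app_nil.
  apply: (Img_ext _ _ _ _ _ (fun i => esym (HV1 i)) (fun i => esym (HV i))).
  exact: app_step (Hall _ Hr).
have [c Hc] : {c | u 0 = c} by exists (u 0).
have H0' : forall j, V j 0 = c by move=> j; rewrite (H0_from _ _ HI j) HV0.
have HE : forall j b, exists k, E (j + k) = b.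
  move=> j b.
  have [i0 Hi0 Hb] : exists2 i0, i0 < n & eletter (nth La w i0) = b.
    case: b.
    - have /(has_nthP La) [i0 Hi0 Hl] := HasAl; exists i0 => //; by case: (nth La w i0) Hl.
    - have /(has_nthP La) [i0 Hi0 Hl] := HasA; exists i0 => //; by case: (nth La w i0) Hl.
  by exists (i0 + n - j %% n); rewrite /E mod_hit.
have H1' : forall j, V j 1 = ~~ c.
  move=> j; have [k Hk] := HE j (~~ c); exact: (H1_gen _ _ _ HI H0' _ _ Hk).
have Hvalid : valid V 0 0 p.
  split => //; split.
    move=> j Hj; rewrite HV0; exact: Hpu.
  by move=> Hp0; rewrite Hp0 in Hp.
have [j' [R0 [R1 [HR [HR0 [HR1 [HA HB]]]]]]] := Main_all _ _ _ HI H0' H1' HE _ _ _ Hvalid.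
set d := shiftw (V j').
exists d, (phiw (iter j' (@cyc lett) (if c then Hw w else Fw w))).
split.
  apply: (derived_ok _ _ _ _ _ HR HR0 HR1).
  - move=> m; exact: occurs_ext HV0 (HA m).
  - move=> i; split => H.
    + have [m Hm] := (HB i (leq0n i)).1 (occurs_ext (fun k => esym (HV0 k)) H).
      by exists m; rewrite Hm add0n.
    + have [m Hm] := H.
      apply: occurs_ext HV0 _; apply/(HB i (leq0n i)).2.
      by exists m; rewrite Hm add0n.
  - move=> b; case: (eqVneq b c) => [->|Hb].
      have [k Hk] := HE j' c; exact: (both_gen _ _ _ HI H0' H1' _ _ Hk).
    exists 0; rewrite /d /shiftw H1'; move: Hb; by case: b; case: (c).
split.
  by case: (c); [right | left]; exists j'.
have Hch := chain _ _ _ HI H0' n j'.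
have Hper : forall i, shiftw (V (j' + n)) i = d i by move=> i; rewrite /d /shiftw /V modnDr.
have := ImgW_ext _ _ _ _ Hper Hch.
have Hsz : size (if c then Hw w else Fw w) = n by case: (c); rewrite size_map.
have Hseq : mkseq (fun i => Gl c (E (j' + i))) n = iter j' (@cyc lett) (if c then Hw w else Fw w).
  rewrite (iter_cyc _ La) ?Hsz //.
  apply: eq_mkseq => i; rewrite /E.
  have Hi := ltn_pmod (j' + i) Hn.
  have Hl := Hall _ Hi.
  case: (c); rewrite /Hw /Fw (nth_map La) //; by case: (nth La w ((j' + i) %% n)) Hl.
by rewrite Hseq.
Qed.
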